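(* Let $(E,C)$ be a configuration structure. Then $C$ is closed under finitely compatible unions iff it is closed under bounded unions and under directed unions. Moreover, $C$ is coherent iff it is closed under bounded unions and weakly coherent.
   Context: $C\subseteq\mathcal{P}(E)$. A set $X$ is consistent if $X\subseteq z$ for some $z\in C$. Closed under bounded unions: $A\subseteq C$ with $\bigcup A$ consistent implies $\bigcup A\in C$. Closed under directed unions: every nonempty $A\subseteq C$ such that any $x,y\in A$ have $z\in A$ with $x\cup y\subseteq z$ satisfies $\bigcup A\in C$. Closed under finitely compatible unions: $A\subseteq C$ with $\bigcup F$ consistent for every finite $F\subseteq A$ implies $\bigcup A\in C$. Coherent: $A\subseteq C$ with $x\cup y$ consistent for all $x,y\in A$ implies $\bigcup A\in C$. Weakly coherent: every $A\subseteq C$ such that all $x,y\in A$ have $z\in C$ with $x\cup y\subseteq z\subseteq\bigcup A$ satisfies $\bigcup A\in C$. *)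

(* Defs.v *)
From mathcomp Require Import all_boot.
From mathcomp Require Import boolp classical_sets cardinality.
Set Implicit Arguments. Unset Strict Implicit. Unset Printing Implicit Defensive.
Local Open Scope classical_set_scope.

(* A configuration structure (E, C): a type of events E and a family C of
   subsets of E (no further axioms). *)

Definition Union (E : Type) (A : set (set E)) : set E := \bigcup_(x in A) x.

Definition consistent (E : Type) (C : set (set E)) (X : set E) : Prop :=
  exists2 z, C z & X `<=` z.

Definition closed_bounded_unions (E : Type) (C : set (set E)) : Prop :=
  forall A : set (set E), A `<=` C -> consistent C (Union A) -> C (Union A).

Definition closed_directed_unions (E : Type) (C : set (set E)) : Prop :=
  forall A : set (set E), A `<=` C -> A !=set0 ->
    (forall x y, A x -> A y -> exists2 z, A z & x `|` y `<=` z) ->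
    C (Union A).

Definition closed_fin_compat_unions (E : Type) (C : set (set E)) : Prop :=
  forall A : set (set E), A `<=` C ->
    (forall F : set (set E), finite_set F -> F `<=` A -> consistent C (Union F)) ->
    C (Union A).

Definition coherent (E : Type) (C : set (set E)) : Prop :=
  forall A : set (set E), A `<=` C ->
    (forall x y, A x -> A y -> consistent C (x `|` y)) ->
    C (Union A).

Definition weakly_coherent (E : Type) (C : set (set E)) : Prop :=
  forall A : set (set E), A `<=` C ->
    (forall x y, A x -> A y -> exists2 z, C z & x `|` y `<=` z /\ z `<=` Union A) ->
    C (Union A).

(* Main.v *)
Require Import Defs.
From mathcomp Require Import all_boot.
From mathcomp Require Import boolp classical_sets cardinality.


Local Open Scope classical_set_scope.

Lemma ub_seq (E : Type) (A : set (set E)) (s : seq (set E)) :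
  A !=set0 ->
  (forall x y, A x -> A y -> exists2 z, A z & x `|` y `<=` z) ->
  (forall x, x \in s -> A x) ->
  exists2 w, A w & forall x, x \in s -> x `<=` w.
Proof.
move=> [a Aa] dir; elim: s => [|h t IH] sA.
  by exists a => // x; rewrite in_nil.
have [w Aw hw] : exists2 w, A w & forall x, x \in t -> x `<=` w.
  by apply: IH => x xt; apply: sA; rewrite in_cons xt orbT.
have Ah : A h by apply: sA; rewrite in_cons eqxx.
have [z Az hz] := dir _ _ Ah Aw.
exists z => // x; rewrite in_cons => /orP [/eqP ->|xt] e xe; apply: hz.
  by left.
by right; apply: hw xt _ xe.
Qed.

Lemma ub_fin (E : Type) (A F : set (set E)) :
  A !=set0 ->
  (forall x y, A x -> A y -> exists2 z, A z & x `|` y `<=` z) ->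
  finite_set F -> F `<=` A ->
  exists2 w, A w & Union F `<=` w.
Proof.
move=> A0 dir /finite_fsetP [X ->] FA.
have [w Aw hw] := @ub_seq E A (finmap.enum_fset X) A0 dir (fun x xX => FA x xX).
by exists w => // e [x xX xe]; apply: hw xX _ xe.
Qed.

Theorem mainTheorem15 (E : Type) (C : set (set E)) :
  (closed_fin_compat_unions C <->
     closed_bounded_unions C /\ closed_directed_unions C) /\
  (coherent C <-> closed_bounded_unions C /\ weakly_coherent C).
Proof.
split; split.
- move=> H; split.
  + move=> A AC [z Cz hz]; apply: H => // F _ FA.
    exists z => // e [x Fx xe]; apply: hz; exists x => //; exact: FA.
  + move=> A AC A0 dir; apply: H => // F Ffin FA.
    have [w Aw hw] := @ub_fin E A F A0 dir Ffin FA.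
    by exists w => //; apply: AC.
- move=> [Hb Hd] A AC Hf.
  pose D := [set u | exists F, [/\ finite_set F, F `<=` A & u = Union F]].
  have DC : D `<=` C.
    move=> u [F [Ffin FA ->]]; apply: Hb; last exact: Hf.
    by move=> x Fx; apply: AC; apply: FA.
  have -> : Union A = Union D.
    apply/seteqP; split => e.
      move=> [x Ax xe]; exists x => //; exists [set x]; split => //.
        by move=> y ->.
      apply/seteqP; split => e' ; first by move=> xe'; exists x.
      by move=> [y -> ].
    by move=> [u [F [_ FA ->]]] [x Fx xe]; exists x => //; apply: FA.
  apply: Hd => //.
    by exists (Union set0), set0; split.
  move=> x y [F [Ff FA ->]] [G [Gf GA ->]].
  exists (Union (F `|` G)).
    exists (F `|` G); split => //; first by rewrite finite_setU.
    by move=> z [/FA|/GA].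
  move=> e [[z Fz ze]|[z Gz ze]]; exists z => //; [by left|by right].
- move=> H; split.
  + move=> A AC [z Cz hz]; apply: H => // x y Ax Ay.
    exists z => // e [xe|ye]; apply: hz; [exists x|exists y] => //.
  + move=> A AC Hw; apply: H => // x y Ax Ay.
    by have [z Cz [hz _]] := Hw x y Ax Ay; exists z.
- move=> [Hb Hw] A AC Hc; apply: Hw => // x y Ax Ay.
  exists (Union [set x; y]).
    apply: Hb; first by move=> u [->|->]; apply: AC.
    have [z Cz hz] := Hc x y Ax Ay.
    exists z => // e [u [->|->] ue]; apply: hz; [left|right] => //.
  split.
    by move=> e [xe|ye]; [exists x => //; left|exists y => //; right].
  by move=> e [u [->|->] ue]; [exists x|exists y].
Qed.
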